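(* Let $E\in M_n(\mathbb{FT})$ be idempotent ($E\otimes E=E$), let $H_E$ be the $\mathcal{H}$-class of $E$ in $M_n(\mathbb{FT})$, and let $\mathrm{Aut}(C(E))$ be the group of $\mathbb{FT}$-module automorphisms of $C(E)$. Let $E_1,\dots,E_n$ denote the columns of $E$. Define $\psi:\mathrm{Aut}(C(E))\to H_E$ by $\psi(f)=(f(E_1)\ \cdots\ f(E_n))$, the matrix whose $i$th column is $f(E_i)$. Then $\psi$ is a well-defined isomorphism of groups (where $H_E$ is a group under tropical matrix multiplication). Dually, $H_E$ is isomorphic to the group of $\mathbb{FT}$-module automorphisms of $R(E)$.
   Context: $\mathbb{FT}$ is $\mathbb{R}$ with $a\oplus b=\max(a,b)$, $a\otimes b=a+b$. $M_n(\mathbb{FT})$ is the semigroup of real $n\times n$ matrices under $(A\otimes B)_{i,j}=\max_k(A_{i,k}+B_{k,j})$. $\mathbb{FT}^n$ is an $\mathbb{FT}$-module under componentwise maximum and scaling $(\lambda\otimes x)_i=\lambda+x_i$; an $\mathbb{FT}$-module automorphism is a bijection preserving $\oplus$ and scaling. $C(A)$ (resp. $R(A)$) is the submodule of $\mathbb{FT}^n$ generated by the columns (resp. rows) of $A$, i.e. the set of all finite $\oplus$-combinations of scalings of them. Green's relations on a semigroup $S$ (with $S^1$ being $S$ with an identity adjoined): $a\,\mathcal{R}\,b$ iff $aS^1=bS^1$, $a\,\mathcal{L}\,b$ iff $S^1a=S^1b$, and $\mathcal{H}=\mathcal{L}\cap\mathcal{R}$. The $\mathcal H$-class of an idempotent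 is a group. *)

(* Defs.v *)
From HB Require Import structures.
From mathcomp Require Import all_boot all_order all_algebra.
From mathcomp Require Import reals.
Set Implicit Arguments. Unset Strict Implicit. Unset Printing Implicit Defensive.
Import Order.TTheory GRing.Theory Num.Theory.
Local Open Scope ring_scope.

(* Tropical (max-plus) semiring FT = R (a realType), a (+) b = max a b, a (x) b = a + b. *)

(* Maximum of a sequence; only meaningful (and only used) for nonempty sequences. *)
Definition maxs (R : realType) (s : seq R) : R := foldr Num.max (head 0 s) s.

Definition tmul (R : realType) (n : nat) (A B : 'M[R]_n) : 'M[R]_n :=
  \matrix_(i, j) maxs [seq A i k + B k j | k <- enum 'I_n].

Definition tmax (R : realType) (a b : nat) (x y : 'M[R]_(a, b)) : 'M[R]_(a, b) :=
  map2_mx Num.max x y.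
Definition tscale (R : realType) (a b : nat) (l : R) (x : 'M[R]_(a, b)) : 'M[R]_(a, b) :=
  map_mx (fun t => l + t) x.

Definition colspace (R : realType) (n : nat) (A : 'M[R]_n) (x : 'cV[R]_n) : Prop :=
  exists (S : {set 'I_n}) (lam : 'I_n -> R),
    S != set0 /\ x = \col_i maxs [seq lam k + A i k | k <- enum S].

Definition rowspace (R : realType) (n : nat) (A : 'M[R]_n) (x : 'rV[R]_n) : Prop :=
  exists (S : {set 'I_n}) (lam : 'I_n -> R),
    S != set0 /\ x = \row_j maxs [seq lam k + A k j | k <- enum S].

(* f is an FT-module automorphism of the submodule M (f is considered only on M). *)
Definition is_aut (R : realType) (a b : nat) (M : 'M[R]_(a, b) -> Prop)
    (f : 'M[R]_(a, b) -> 'M[R]_(a, b)) : Prop :=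
  [/\ (forall x, M x -> M (f x)),
      (forall x y, M x -> M y -> f x = f y -> x = y),
      (forall y, M y -> exists x, M x /\ f x = y),
      (forall x y, M x -> M y -> f (tmax x y) = tmax (f x) (f y)) &
      (forall l x, M x -> f (tscale l x) = tscale l (f x))].

(* Green's relations in the monoid S^1 where S = M_n(FT). *)
Definition in_right_ideal (R : realType) (n : nat) (A B : 'M[R]_n) : Prop :=
  A = B \/ exists X, A = tmul B X.
Definition in_left_ideal (R : realType) (n : nat) (A B : 'M[R]_n) : Prop :=
  A = B \/ exists X, A = tmul X B.
Definition Rrel (R : realType) (n : nat) (A B : 'M[R]_n) : Prop :=
  in_right_ideal A B /\ in_right_ideal B A.
Definition Lrel (R : realType) (n : nat) (A B : 'M[R]_n) : Prop :=
  in_left_ideal A B /\ in_left_ideal B A.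
Definition Hrel (R : realType) (n : nat) (A B : 'M[R]_n) : Prop :=
  Rrel A B /\ Lrel A B.

Definition psi (R : realType) (n : nat) (E : 'M[R]_n) (f : 'cV[R]_n -> 'cV[R]_n) : 'M[R]_n :=
  \matrix_(i, j) f (col j E) i 0.

(* Main.v *)
Require Import Defs.
From HB Require Import structures.
From mathcomp Require Import all_boot all_order all_algebra.
From mathcomp Require Import reals.
From Stdlib Require Import ClassicalEpsilon.
Set Implicit Arguments. Unset Strict Implicit. Unset Printing Implicit Defensive.
Import Order.TTheory GRing.Theory Num.Theory.
Local Open Scope ring_scope.

Section Maxs.
Variable R : realType.

Lemma foldr_max_ge (c : R) s x : x \in s -> x <= foldr Num.max c s.
Proof.
elim: s => //= a s IH; rewrite inE => /orP [/eqP -> | /IH h]; rewrite le_max.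
  by rewrite lexx.
by rewrite h orbT.
Qed.

Lemma foldr_max_c (c : R) s : c <= foldr Num.max c s.
Proof. by elim: s => //= a s IH; rewrite le_max IH orbT. Qed.

Lemma foldr_max_mem (c : R) s : foldr Num.max c s \in c :: s.
Proof.
elim: s => [|a s IH] /=; first by rewrite inE.
case: (lerP a (foldr Num.max c s)) => h.
  move: IH; rewrite !inE => /orP [->|->] //; by rewrite !orbT.
by rewrite !inE eqxx orbT.
Qed.

Lemma maxs_ge_seq s (x : R) : x \in s -> x <= maxs s.
Proof. exact: foldr_max_ge. Qed.

Lemma maxs_mem_seq (s : seq R) : s != [::] -> maxs s \in s.
Proof.
case: s => // a s _; rewrite /maxs /=.
have := foldr_max_mem a (a :: s); rewrite /= inE => /orP [/eqP ->|] //.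
by rewrite inE eqxx.
Qed.

Variable T : eqType.

Lemma maxs_ge (F : T -> R) s k : k \in s -> F k <= maxs (map F s).
Proof. by move=> h; apply: maxs_ge_seq; apply: map_f. Qed.

Lemma maxs_ex (F : T -> R) s : s != [::] -> exists2 k, k \in s & maxs (map F s) = F k.
Proof.
move=> hs; have : maxs (map F s) \in map F s by apply: maxs_mem_seq; case: s hs.
by case/mapP => k hk ->; exists k.
Qed.

Lemma maxs_le (F : T -> R) s m : s != [::] -> (forall k, k \in s -> F k <= m) ->
  maxs (map F s) <= m.
Proof. by move=> hs h; case: (maxs_ex F hs) => k hk ->; apply: h. Qed.

Lemma maxs_eqP (F : T -> R) s m : s != [::] -> (forall k, k \in s -> F k <= m) ->
  (exists2 k, k \in s & m <= F k) -> maxs (map F s) = m.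
Proof.
move=> hs h [k hk hm]; apply: le_anti; rewrite maxs_le //=.
exact: le_trans hm (maxs_ge F hk).
Qed.

Lemma maxs_ext (F G : T -> R) s s' : s != [::] -> s =i s' -> {in s, F =1 G} ->
  maxs (map F s) = maxs (map G s').
Proof.
move=> hs hss hFG; case: (maxs_ex F hs) => k hk hm; rewrite hm; apply: esym; apply: maxs_eqP.
- by apply/eqP => e; move: hk; rewrite hss e.
- move=> l; rewrite -hss => hl; rewrite -hFG // -hm.
  by apply: maxs_ge.
- by exists k; rewrite ?hFG // -hss.
Qed.

Lemma maxs_addl (F : T -> R) s c : s != [::] ->
  maxs (map (fun k => c + F k) s) = c + maxs (map F s).
Proof.
move=> hs; case: (maxs_ex F hs) => k hk hm; rewrite hm; apply: maxs_eqP => //.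
  by move=> l hl; rewrite lerD2l -hm; apply: maxs_ge.
by exists k.
Qed.

Lemma maxs_max (F G : T -> R) s : s != [::] ->
  maxs (map (fun k => Num.max (F k) (G k)) s) = Num.max (maxs (map F s)) (maxs (map G s)).
Proof.
move=> hs; apply: le_anti; rewrite maxs_le //=.
  rewrite ge_max; apply/andP; split; apply: maxs_le => // k hk.
    by apply: le_trans (maxs_ge (fun k => Num.max (F k) (G k)) hk); rewrite le_max lexx.
  by apply: le_trans (maxs_ge (fun k => Num.max (F k) (G k)) hk); rewrite le_max lexx orbT.
by move=> k hk; rewrite ge_max !le_max (maxs_ge F hk) (maxs_ge G hk) orbT.
Qed.

Lemma maxs_cons (a : R) s : s != [::] -> maxs (a :: s) = Num.max a (maxs s).
Proof.
move=> hs; apply: le_anti; apply/andP; split.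
  have := maxs_mem_seq (s := a :: s) isT; rewrite inE => /orP [/eqP ->|h].
    by rewrite le_max lexx.
  by rewrite le_max (maxs_ge_seq h) orbT.
rewrite ge_max maxs_ge_seq ?inE ?eqxx //=.
by apply: maxs_ge_seq; rewrite inE (maxs_mem_seq hs) orbT.
Qed.

End Maxs.
Section Gmul.
Variable R : realType.

Definition gmul (m p q : nat) (A : 'M[R]_(m,p)) (B : 'M[R]_(p,q)) : 'M[R]_(m,q) :=
  \matrix_(i, j) maxs [seq A i k + B k j | k <- enum 'I_p].

Lemma tmulE n (A B : 'M[R]_n) : tmul A B = gmul A B.
Proof. by []. Qed.

Lemma enum_ne0 p : (0 < p)%N -> enum 'I_p != [::].
Proof. by move=> hp; rewrite -size_eq0 size_enum_ord -lt0n. Qed.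

Lemma in_enum p (l : 'I_p) : l \in enum 'I_p.
Proof. by rewrite mem_enum. Qed.

Lemma gmulA m p q r (A : 'M[R]_(m,p)) (B : 'M[R]_(p,q)) (C : 'M[R]_(q,r)) :
  (0 < p)%N -> (0 < q)%N -> gmul (gmul A B) C = gmul A (gmul B C).
Proof.
move=> hp hq; apply/matrixP => i j; rewrite !mxE; apply: le_anti; apply/andP; split.
  apply: maxs_le; first exact: enum_ne0.
  move=> k _; rewrite mxE.
  case: (maxs_ex (fun l => A i l + B l k) (enum_ne0 hp)) => l _ ->.
  apply: le_trans (maxs_ge (fun l => A i l + gmul B C l j) (in_enum l)).
  rewrite -addrA lerD2l mxE.
  exact: (maxs_ge (fun k => B l k + C k j) (in_enum k)).
apply: maxs_le; first exact: enum_ne0.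
move=> l _; rewrite mxE.
case: (maxs_ex (fun k => B l k + C k j) (enum_ne0 hq)) => k _ ->.
apply: le_trans (maxs_ge (fun k => gmul A B i k + C k j) (in_enum k)).
rewrite addrA lerD2r mxE.
exact: (maxs_ge (fun l => A i l + B l k) (in_enum l)).
Qed.

Lemma gmul_tr m p q (A : 'M[R]_(m,p)) (B : 'M[R]_(p,q)) :
  (gmul A B)^T = gmul B^T A^T.
Proof.
apply/matrixP => i j; rewrite !mxE; congr maxs; apply: eq_map => k.
by rewrite !mxE addrC.
Qed.

Lemma col_gmul m p q (A : 'M[R]_(m,p)) (B : 'M[R]_(p,q)) j :
  col j (gmul A B) = gmul A (col j B).
Proof.
apply/matrixP => i k; rewrite !mxE; congr maxs; apply: eq_map => l.
by rewrite !mxE.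
Qed.

Lemma row_gmul m p q (A : 'M[R]_(m,p)) (B : 'M[R]_(p,q)) i :
  row i (gmul A B) = gmul (row i A) B.
Proof.
apply/matrixP => k j; rewrite !mxE; congr maxs; apply: eq_map => l.
by rewrite !mxE.
Qed.

Lemma gmul_tmax m p (A : 'M[R]_(m,p)) (x y : 'cV[R]_p) : (0 < p)%N ->
  gmul A (tmax x y) = tmax (gmul A x) (gmul A y).
Proof.
move=> hp; apply/matrixP => i j; rewrite !mxE -maxs_max; last exact: enum_ne0.
congr maxs; apply: eq_map => k; by rewrite !mxE addr_maxr.
Qed.

Lemma gmul_tscale m p (A : 'M[R]_(m,p)) (x : 'cV[R]_p) l : (0 < p)%N ->
  gmul A (tscale l x) = tscale l (gmul A x).
Proof.
move=> hp; apply/matrixP => i j; rewrite !mxE -maxs_addl; last exact: enum_ne0.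
congr maxs; apply: eq_map => k; by rewrite !mxE addrCA.
Qed.

Lemma tmax_tr a b (x y : 'M[R]_(a,b)) : (tmax x y)^T = tmax x^T y^T.
Proof. by apply/matrixP => i j; rewrite !mxE. Qed.

Lemma tscale_tr a b l (x : 'M[R]_(a,b)) : (tscale l x)^T = tscale l x^T.
Proof. by apply/matrixP => i j; rewrite !mxE. Qed.

End Gmul.
Section Col.
Variables (R : realType) (n : nat).
Hypothesis hn : (0 < n)%N.
Variable E : 'M[R]_n.
Hypothesis EE : tmul E E = E.

Let EEg : gmul E E = E. Proof. exact: EE. Qed.
Let ne := enum_ne0 hn.

Lemma Eexp i l : E i l = maxs [seq E i k + E k l | k <- enum 'I_n].
Proof. by rewrite -{1}EEg mxE. Qed.

Lemma Ele i k l : E i k + E k l <= E i l.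
Proof. by rewrite [E i l]Eexp; apply: (maxs_ge (fun k => E i k + E k l) (in_enum k)). Qed.

Lemma Eex i l : exists k, E i l = E i k + E k l.
Proof.
by case: (maxs_ex (fun k => E i k + E k l) ne) => k _ h; exists k; rewrite [E i l]Eexp.
Qed.

Lemma colspaceP x : colspace E x <-> gmul E x = x.
Proof.
split.
  case=> S [lam [hS ->]].
  have hS' : enum S != [::].
    by case/set0Pn: hS => a ha; apply/eqP => e; move: ha; rewrite -mem_enum e.
  apply/matrixP => i j; rewrite !mxE; apply: le_anti; apply/andP; split.
    apply: maxs_le => // k _; rewrite mxE.
    case: (maxs_ex (fun l => lam l + E k l) hS') => l hl ->.
    apply: le_trans (maxs_ge (fun l => lam l + E i l) hl).
    by rewrite addrCA lerD2l Ele.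
  apply: maxs_le => // l hl; case: (Eex i l) => k ->.
  apply: le_trans (maxs_ge (fun k => E i k + (\col_i0 maxs [seq lam k0 + E i0 k0 | k0 <- enum S]) k j) (in_enum k)).
  rewrite mxE addrCA lerD2l.
  exact: (maxs_ge (fun l => lam l + E k l) hl).
move=> h; exists setT, (fun k => x k 0); split.
  by apply/set0Pn; exists (Ordinal hn); rewrite inE.
apply/matrixP => i j; transitivity (gmul E x i 0); first by rewrite h (ord1 j).
rewrite !mxE; apply: maxs_ext => //; [by move=> k; rewrite !mem_enum ?inE|].
by move=> k _; rewrite addrC.
Qed.

Lemma col_in j : colspace E (col j E).
Proof. by apply/colspaceP; rewrite -col_gmul EEg. Qed.

Lemma gmulE_in (z : 'cV[R]_n) : colspace E (gmul E z).
Proof. by apply/colspaceP; rewrite -gmulA // EEg. Qed.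

Definition comb (A : 'M[R]_n) (y : 'cV[R]_n) (s : seq 'I_n) : 'cV[R]_n :=
  \matrix_(i, j) maxs [seq A i k + y k j | k <- s].

Lemma comb_in y s : s != [::] -> colspace E (comb E y s).
Proof.
move=> hs; exists [set k | k \in s], (fun k => y k 0); split.
  by case: s hs => // a s _; apply/set0Pn; exists a; rewrite inE inE eqxx.
apply/matrixP => i j; rewrite !mxE (ord1 j); apply: maxs_ext => //.
  by move=> k; rewrite mem_enum inE.
by move=> k _; rewrite addrC.
Qed.

Lemma comb1 A y a : comb A y [:: a] = tscale (y a 0) (col a A).
Proof. by apply/matrixP => i j; rewrite !mxE (ord1 j) /maxs /= maxxx addrC. Qed.

Lemma comb_cons A y a s : s != [::] ->
  comb A y (a :: s) = tmax (tscale (y a 0) (col a A)) (comb A y s).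
Proof.
move=> hs; apply/matrixP => i j; rewrite !mxE (ord1 j) /= maxs_cons; last by case: s hs.
by rewrite addrC.
Qed.

Lemma col_psi f j : col j (psi E f) = f (col j E).
Proof. by apply/matrixP => i k; rewrite !mxE (ord1 k). Qed.

Lemma comb_aut f y s : is_aut (colspace E) f -> s != [::] ->
  f (comb E y s) = comb (psi E f) y s.
Proof.
case=> f1 f2 f3 f4 f5; elim: s => // a s IH _.
have in1 : colspace E (tscale (y a 0) (col a E)) by rewrite -comb1; apply: comb_in.
case: (eqVneq s [::]) => [->|hs].
  rewrite !comb1 f5; last exact: col_in.
  by congr tscale; apply: esym; apply: col_psi.
rewrite !comb_cons // f4 //; last exact: comb_in.
rewrite IH // f5; last exact: col_in.
by congr (tmax (tscale _ _) _); apply: esym; apply: col_psi.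
Qed.

Lemma keyL f x : is_aut (colspace E) f -> colspace E x -> f x = gmul (psi E f) x.
Proof.
move=> hf hx; move/colspaceP: (hx) => hx'.
by rewrite -{1}hx' [gmul E x]/(comb E x (enum 'I_n)) comb_aut.
Qed.


Lemma col_eq (A B : 'M[R]_n) : (forall j, col j A = col j B) -> A = B.
Proof.
by move=> h; apply/matrixP => i j; have := congr1 (fun M : 'cV[R]_n => M i 0) (h j); rewrite !mxE.
Qed.

Lemma choice_cols (P : 'I_n -> 'cV[R]_n -> Prop) :
  (forall j, exists x, P j x) -> exists G : 'M[R]_n, forall j, P j (col j G).
Proof.
move=> h; pose g j := epsilon (inhabits 0) (P j).
exists (\matrix_(i, j) g j i 0) => j.
have -> : col j (\matrix_(i, j) g j i 0) = g j.
  by apply/matrixP => i k; rewrite !mxE (ord1 k).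
exact: epsilon_spec (h j).
Qed.

Let gA := fun (A B C : 'M[R]_n) => gmulA A B C hn hn.
Let gAv := fun (A B : 'M[R]_n) (C : 'cV[R]_n) => gmulA A B C hn hn.

Lemma Hrel_unpack H : Hrel H E -> exists X X' Y Y',
  [/\ H = gmul E X, H = gmul X' E, E = gmul H Y & E = gmul Y' H].
Proof.
case=> [[r1 r2] [l1 l2]].
have [X hX] : exists X, H = gmul E X.
  by case: r1 => [e|[Z ->]]; [exists E; rewrite e EEg | exists Z].
have [X' hX'] : exists X, H = gmul X E.
  by case: l1 => [e|[Z ->]]; [exists E; rewrite e EEg | exists Z].
have [Y hY] : exists Y, E = gmul H Y.
  by case: r2 => [e|[Z ->]]; [exists E; rewrite -e EEg | exists Z].
have [Y' hY'] : exists Y, E = gmul Y H.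
  by case: l2 => [e|[Z ->]]; [exists E; rewrite -e EEg | exists Z].
by exists X, X', Y, Y'.
Qed.

Lemma Hrel_pack H X X' Y Y' :
  H = gmul E X -> H = gmul X' E -> E = gmul H Y -> E = gmul Y' H -> Hrel H E.
Proof. by move=> h1 h2 h3 h4; split; split; right; [exists X|exists Y|exists X'|exists Y']. Qed.

Lemma Hrel_HE H : Hrel H E -> gmul H E = H /\ gmul E H = H.
Proof.
case/Hrel_unpack => X [X' [Y [Y' [h1 h2 _ _]]]]; split.
  by rewrite h2 gA EEg.
by rewrite h1 -gA EEg.
Qed.

Lemma aut_Hrel f : is_aut (colspace E) f -> Hrel (psi E f) E.
Proof.
move=> hf; case: (hf) => f1 f2 f3 f4 f5.
have colF j : colspace E (col j (psi E f)) by rewrite col_psi; apply: f1; apply: col_in.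
have FE : gmul E (psi E f) = (psi E f).
  by apply: col_eq => j; rewrite col_gmul; apply/colspaceP.
have [G hG] := @choice_cols (fun j x => colspace E x /\ f x = col j E)
   (fun j => f3 _ (col_in j)).
have FG : gmul (psi E f) G = E.
  apply: col_eq => j; rewrite col_gmul -keyL //; by case: (hG j).
have FE2 : gmul (psi E f) E = (psi E f).
  by apply: col_eq => j; rewrite col_gmul col_psi (keyL (f:=f)) //; exact: col_in.
have GE : gmul E G = G.
  by apply: col_eq => j; rewrite col_gmul; apply/colspaceP; case: (hG j).
have GF : gmul G (psi E f) = E.
  apply: col_eq => j; rewrite col_gmul.
  have zin : colspace E (gmul G (col j (psi E f))) by apply/colspaceP; rewrite -gAv GE.
  apply: f2 => //; first exact: col_in.
  have k1 := keyL hf zin; rewrite k1 -gAv FG.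
  have k2 : gmul E (col j (psi E f)) = col j (psi E f) by apply/colspaceP.
  by rewrite k2 col_psi.
exact: (@Hrel_pack (psi E f) (psi E f) (psi E f) G G).
Qed.

Lemma aut_hom f g : is_aut (colspace E) f -> is_aut (colspace E) g ->
  psi E (f \o g) = tmul (psi E f) (psi E g).
Proof.
move=> hf hg; apply: col_eq => j; rewrite col_psi tmulE col_gmul col_psi /=.
by rewrite keyL //; case: hg => g1 _ _ _ _; apply: g1; apply: col_in.
Qed.

Lemma aut_inj f g : is_aut (colspace E) f -> is_aut (colspace E) g ->
  psi E f = psi E g -> forall x, colspace E x -> f x = g x.
Proof. by move=> hf hg e x hx; rewrite (keyL hf hx) (keyL hg hx) e. Qed.

Lemma psi_ext (f g : 'cV[R]_n -> 'cV[R]_n) :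
  (forall j, f (col j E) = g (col j E)) -> psi E f = psi E g.
Proof. by move=> h; apply/matrixP => i j; rewrite !mxE h. Qed.

Lemma Hrel_aut H : Hrel H E -> exists f, is_aut (colspace E) f /\ psi E f = H.
Proof.
move=> hH; have [HE EH] := Hrel_HE hH.
case: (Hrel_unpack hH) => X [X' [Y [Y' [h1 h2 h3 h4]]]].
exists (gmul H); split; last first.
  by apply/matrixP => i j; rewrite mxE -col_gmul HE mxE.
split.
- by move=> x _; apply/colspaceP; rewrite -gAv EH.
- move=> x y hx hy e.
  by rewrite -(colspaceP x).1 // -(colspaceP y).1 // h4 !gAv e.
- move=> y hy; exists (gmul E (gmul Y y)); split; first exact: gmulE_in.
  by rewrite -gAv HE -gAv -h3; apply/colspaceP.
- by move=> x y _ _; apply: gmul_tmax.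
- by move=> l x _; apply: gmul_tscale.
Qed.

Lemma Hrel_inv A : Hrel A E ->
  exists K, [/\ Hrel K E, gmul K A = E & gmul A K = E].
Proof.
move=> hA; have [AE EA] := Hrel_HE hA.
case: (Hrel_unpack hA) => X [X' [Y [Y' [h1 h2 h3 h4]]]].
have AK : gmul A (gmul E (gmul Y E)) = E by rewrite -gA AE -gA -h3 EEg.
have KA : gmul (gmul E (gmul Y E)) A = E.
  rewrite gA gA EA {1}h4 gA -[gmul A (gmul Y A)]gA -h3 EA.
  by rewrite -h4.
exists (gmul E (gmul Y E)); split => //.
by apply: (@Hrel_pack _ (gmul Y E) (gmul E Y) A A); [done|rewrite gA|rewrite KA|rewrite AK].
Qed.

End Col.
Section Trans.
Variable R : realType.

Definition conjT a b (f : 'M[R]_(b,a) -> 'M[R]_(b,a)) : 'M[R]_(a,b) -> 'M[R]_(a,b) :=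
  fun x => (f x^T)^T.

Lemma aut_conj a b (M1 : 'M[R]_(a,b) -> Prop) (M2 : 'M[R]_(b,a) -> Prop)
  (h : forall x, M1 x <-> M2 x^T) f : is_aut M2 f -> is_aut M1 (conjT f).
Proof.
case=> f1 f2 f3 f4 f5; split.
- by move=> x hx; apply/h; rewrite /conjT trmxK; apply: f1; apply/h.
- move=> x y hx hy e; apply: trmx_inj; apply: f2; [exact/h|exact/h|].
  exact: trmx_inj e.
- move=> y hy; case: (f3 _ ((h _).1 hy)) => x [hx e]; exists x^T; split.
    by apply/h; rewrite trmxK.
  by rewrite /conjT trmxK e trmxK.
- move=> x y hx hy; rewrite /conjT tmax_tr f4; [by rewrite tmax_tr|exact/h|exact/h].
- by move=> l x hx; rewrite /conjT tscale_tr f5 ?tscale_tr //; apply/h.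
Qed.

Lemma aut_comp a b (M : 'M[R]_(a,b) -> Prop) f g :
  is_aut M f -> is_aut M g -> is_aut M (f \o g).
Proof.
case=> f1 f2 f3 f4 f5 [g1 g2 g3 g4 g5]; split => /=.
- by move=> x hx; apply: f1; apply: g1.
- by move=> x y hx hy e; apply: g2 => //; apply: f2 => //; [apply: g1|apply: g1].
- move=> y hy; case: (f3 _ hy) => z [hz <-]; case: (g3 _ hz) => x [hx <-].
  by exists x.
- by move=> x y hx hy; rewrite g4 // f4 //; [apply: g1|apply: g1].
- by move=> l x hx; rewrite g5 // f5 //; apply: g1.
Qed.

Lemma Hrel_tr n (A B : 'M[R]_n) : Hrel A B -> Hrel A^T B^T.
Proof.
case=> [[r1 r2] [l1 l2]]; split; split.
- by case: l1 => [->|[X ->]]; [left|right; exists X^T; rewrite !tmulE gmul_tr].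
- by case: l2 => [->|[X ->]]; [left|right; exists X^T; rewrite !tmulE gmul_tr].
- by case: r1 => [->|[X ->]]; [left|right; exists X^T; rewrite !tmulE gmul_tr].
- by case: r2 => [->|[X ->]]; [left|right; exists X^T; rewrite !tmulE gmul_tr].
Qed.

End Trans.

Section Row.
Variables (R : realType) (n : nat).
Hypothesis hn : (0 < n)%N.
Variable E : 'M[R]_n.
Hypothesis EE : tmul E E = E.

Let EEg : gmul E E = E. Proof. exact: EE. Qed.
Let EET : tmul E^T E^T = E^T. Proof. by rewrite tmulE -gmul_tr EEg. Qed.
Let gA := fun (A B C : 'M[R]_n) => gmulA A B C hn hn.

Lemma row_col (x : 'rV[R]_n) : rowspace E x <-> colspace E^T x^T.
Proof.
split; case=> S [lam [hS hx]]; exists S, lam; split => //.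
  rewrite hx; apply/matrixP => i j; rewrite !mxE; congr maxs; apply: eq_map => k.
  by rewrite mxE.
rewrite -[x]trmxK hx; apply/matrixP => i j; rewrite !mxE; congr maxs; apply: eq_map => k.
by rewrite mxE.
Qed.

Lemma col_row (x : 'cV[R]_n) : colspace E^T x <-> rowspace E x^T.
Proof. by rewrite row_col trmxK. Qed.

Definition Pm (f : 'rV[R]_n -> 'rV[R]_n) : 'M[R]_n := (psi E^T (conjT f))^T.

Definition phi (f : 'rV[R]_n -> 'rV[R]_n) : 'M[R]_n :=
  epsilon (inhabits 0) (fun K => [/\ Hrel K E, tmul K (Pm f) = E & tmul (Pm f) K = E]).

Lemma cf_aut f : is_aut (rowspace E) f -> is_aut (colspace E^T) (conjT f).
Proof. by apply: aut_conj => x; apply: col_row. Qed.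

Lemma Pm_H f : is_aut (rowspace E) f -> Hrel (Pm f) E.
Proof.
move=> hf; rewrite -[E]trmxK; apply: Hrel_tr.
exact: (aut_Hrel hn EET (cf_aut hf)).
Qed.

Lemma phi_spec f : is_aut (rowspace E) f ->
  [/\ Hrel (phi f) E, tmul (phi f) (Pm f) = E & tmul (Pm f) (phi f) = E].
Proof.
move=> hf; rewrite /phi.
apply: (epsilon_spec (inhabits 0) (fun K : 'M[R]_n => [/\ Hrel K E, tmul K (Pm f) = E & tmul (Pm f) K = E])).
case: (Hrel_inv hn EE (Pm_H hf)) => K [h1 h2 h3]; by exists K.
Qed.

Lemma Pm_hom f g : is_aut (rowspace E) f -> is_aut (rowspace E) g ->
  Pm (f \o g) = tmul (Pm g) (Pm f).
Proof.
move=> hf hg; rewrite /Pm.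
have -> : psi E^T (conjT (f \o g)) = psi E^T (conjT f \o conjT g).
  by apply: psi_ext => j; rewrite /conjT /= trmxK.
by rewrite (aut_hom hn EET (cf_aut hf) (cf_aut hg)) tmulE gmul_tr.
Qed.

Lemma uniq_inv K K' A : gmul K E = K -> gmul E K' = K' ->
  gmul K A = E -> gmul A K' = E -> K = K'.
Proof. by move=> h1 h2 h3 h4; rewrite -h1 -h4 -gA h3 h2. Qed.

Lemma row_part :
  exists phi : ('rV[R]_n -> 'rV[R]_n) -> 'M[R]_n,
     (forall f g, is_aut (rowspace E) f -> is_aut (rowspace E) g ->
        (forall x, rowspace E x -> f x = g x) -> phi f = phi g) /\
     (forall f, is_aut (rowspace E) f -> Hrel (phi f) E) /\
     (forall f g, is_aut (rowspace E) f -> is_aut (rowspace E) g ->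
        phi (f \o g) = tmul (phi f) (phi g)) /\
     (forall f g, is_aut (rowspace E) f -> is_aut (rowspace E) g ->
        phi f = phi g -> forall x, rowspace E x -> f x = g x) /\
     (forall H, Hrel H E -> exists f, is_aut (rowspace E) f /\ phi f = H).
Proof.
exists phi; split; [|split; [|split; [|split]]].
- move=> f g hf hg h.
  have e : Pm f = Pm g.
    rewrite /Pm; congr trmx; apply: psi_ext => j; rewrite /conjT; congr trmx.
    by apply: h; apply/row_col; rewrite trmxK; apply: col_in.
  by rewrite /phi e.
- by move=> f hf; case: (phi_spec hf).
- move=> f g hf hg.
  have hfg := aut_comp hf hg.
  case: (phi_spec hfg) => K1 K2 K3; case: (phi_spec hf) => F1 F2 F3;
    case: (phi_spec hg) => G1 G2 G3.
  have [KE _] := Hrel_HE hn EE K1.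
  have [_ EF] := Hrel_HE hn EE F1.
  have [PgE _] := Hrel_HE hn EE (Pm_H hg).
  apply: (uniq_inv (A := Pm (f \o g))) => //.
  + by rewrite tmulE -gA EF.
  + have F3' : gmul (Pm f) (phi f) = E := F3.
    rewrite Pm_hom // !tmulE gA -[gmul (Pm f) _]gA F3' -gA PgE.
    exact: G3.
- move=> f g hf hg e.
  case: (phi_spec hf) => F1 F2 F3; case: (phi_spec hg) => G1 G2 G3.
  have [PfE _] := Hrel_HE hn EE (Pm_H hf).
  have [_ EPg] := Hrel_HE hn EE (Pm_H hg).
  have ePm : Pm f = Pm g.
    have G2' : gmul (phi g) (Pm g) = E := G2.
    have F3' : gmul (Pm f) (phi f) = E := F3.
    transitivity (gmul (Pm f) E); first by rewrite PfE.
    by rewrite -G2' -gA -e F3' EPg.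
  have epsi : psi E^T (conjT f) = psi E^T (conjT g) by apply: trmx_inj; exact: ePm.
  move=> x hx; apply: trmx_inj.
  have hx' : colspace E^T x^T by apply/row_col.
  have := aut_inj hn EET (cf_aut hf) (cf_aut hg) epsi hx'.
  by rewrite /conjT !trmxK.
- move=> H hH.
  case: (Hrel_inv hn EE hH) => K [hK KH HK].
  have hKT : Hrel K^T E^T by apply: Hrel_tr.
  case: (Hrel_aut hn EET hKT) => fc [hfc pfc].
  have hf : is_aut (rowspace E) (conjT fc).
    by apply: (@aut_conj _ _ _ _ (colspace E^T)) => // x; apply: row_col.
  exists (conjT fc); split => //.
  have ePm : Pm (conjT fc) = K.
    rewrite /Pm -[K]trmxK -pfc; congr trmx; apply: psi_ext => j.
    by rewrite /conjT !trmxK.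
  case: (phi_spec hf) => F1 F2 F3; rewrite ePm in F2.
  have [FE _] := Hrel_HE hn EE F1.
  have [_ EH] := Hrel_HE hn EE hH.
  have F2' : gmul (phi (conjT fc)) K = E := F2.
  by rewrite -FE -KH -gA F2' EH.
Qed.

End Row.
Lemma all_eq0 (R : realType) a b (A B : 'M[R]_(a, b)) : (a = 0 \/ b = 0)%N -> A = B.
Proof.
case=> h; subst.
  by rewrite (flatmx0 A) (flatmx0 B).
by rewrite (thinmx0 A) (thinmx0 B).
Qed.

Theorem theorem3p4 (R : realType) (n : nat) (E : 'M[R]_n) :
  tmul E E = E ->
  (* psi : Aut(C(E)) -> H_E is a well-defined group isomorphism *)
  ((forall f, is_aut (colspace E) f -> Hrel (psi E f) E) /\
   (forall f g, is_aut (colspace E) f -> is_aut (colspace E) g ->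
      psi E (f \o g) = tmul (psi E f) (psi E g)) /\
   (forall f g, is_aut (colspace E) f -> is_aut (colspace E) g ->
      psi E f = psi E g -> forall x, colspace E x -> f x = g x) /\
   (forall H, Hrel H E -> exists f, is_aut (colspace E) f /\ psi E f = H)) /\
  (* dually, H_E is isomorphic to Aut(R(E)) *)
  (exists phi : ('rV[R]_n -> 'rV[R]_n) -> 'M[R]_n,
     (forall f g, is_aut (rowspace E) f -> is_aut (rowspace E) g ->
        (forall x, rowspace E x -> f x = g x) -> phi f = phi g) /\
     (forall f, is_aut (rowspace E) f -> Hrel (phi f) E) /\
     (forall f g, is_aut (rowspace E) f -> is_aut (rowspace E) g ->
        phi (f \o g) = tmul (phi f) (phi g)) /\
     (forall f g, is_aut (rowspace E) f -> is_aut (rowspace E) g ->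
        phi f = phi g -> forall x, rowspace E x -> f x = g x) /\
     (forall H, Hrel H E -> exists f, is_aut (rowspace E) f /\ phi f = H)).
Proof.
move=> EE; case: (posnP n) => [n0|hn].
  have eqM : forall a b (A B : 'M[R]_(a, b)), (a = n \/ b = n)%N -> A = B.
    by move=> a b A B h; apply: all_eq0; rewrite -n0.
  have hH : forall A : 'M[R]_n, Hrel A E.
    by move=> A; split; split; left; apply: eqM; left.
  have aut_id : forall (a b : nat) (M : 'M[R]_(a,b) -> Prop), is_aut M id.
    by move=> a b M; split => // y hy; exists y.
  split.
  split; first by move=> f _; apply: hH.
  split; [|split].
  - by move=> f g _ _; apply: eqM; left.
  - by move=> f g _ _ _ x _; apply: eqM; left.
  - by move=> H _; exists id; split => //; apply: eqM; left.
  exists (fun _ => E); split; [|split; [|split; [|split]]].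
  - by [].
  - by [].
  - by move=> f g _ _; apply: eqM; left.
  - by move=> f g _ _ _ x _; apply: eqM; right.
  - by move=> H _; exists id; split => //; apply: eqM; left.
split; last exact: row_part.
split; first by move=> f; apply: aut_Hrel.
split; first by move=> f g; apply: aut_hom.
split; first by move=> f g; apply: aut_inj.
by move=> H; apply: Hrel_aut.
Qed.
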